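(* Assume $V=L$. Let $\zeta\in\Xi$, $X\in\mathrm{IPS}_\zeta$, let $\eta\in\Xi$ with $\eta\subseteq\zeta$, and let $i\in\zeta\setminus\eta$. Then there exist $x,y\in X$ with $x\restriction\eta=y\restriction\eta$ but $x(i)\neq y(i)$.
   Context: $T$ is the set of all nonempty finite sequences of countable ordinals, partially ordered by strict extension $\subset$. $\Xi$ is the set of all at most countable $\xi\subseteq T$ that are initial segments ($j\subset i\in\xi\Rightarrow j\in\xi$). $D=2^\omega$ is the Cantor space and, for $\xi\in\Xi$, $D^\xi$ is the product of $\xi$ copies of $D$ with the product topology. For $\eta\subseteq\xi$ in $\Xi$ and $x\in D^\xi$, $x\restriction\eta$ is the restriction. For $\zeta\in\Xi$, $\mathrm{IPS}_\zeta$ is the set of all $X\subseteq D^\zeta$ such that there is a homeomorphism $H$ of $D^\zeta$ onto $X$ satisfying, for all $x_0,x_1\in D^\zeta$ and all $\xi\in\Xi$ with $\xi\subseteq\zeta$: $x_0\restriction\xi=x_1\restriction\xi\iff H(x_0)\restriction\xi=H(x_1)\restriction\xi$. *)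

(* Defs.v *)
From HB Require Import structures.
From mathcomp Require Import all_boot all_order.
From mathcomp Require Import all_classical all_reals all_analysis.
Set Implicit Arguments. Unset Strict Implicit. Unset Printing Implicit Defensive.
Local Open Scope classical_set_scope.

(** * Countable ordinals
    A countable ordinal is the order type (isomorphism class) of a
    well-order whose field is a subset of nat.  A (reflexive) order R on nat
    has field [n | R n n]. *)
Definition is_wo (R : nat -> nat -> Prop) : Prop :=
  [/\ (forall m n, R m n -> R m m /\ R n n),
      (forall m n, R m n -> R n m -> m = n),
      (forall m n p, R m n -> R n p -> R m p),
      (forall m n, R m m -> R n n -> R m n \/ R n m)
    & well_founded (fun m n => R m n /\ m <> n)].

Definition wo_iso (R S : nat -> nat -> Prop) : Prop :=
  exists f : nat -> nat,
    [/\ (forall m n, R m m -> R n n -> (R m n <-> S (f m) (f n))),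
        (forall m, R m m -> S (f m) (f m))
      & (forall k, S k k -> exists m, R m m /\ f m = k)].

Definition cord : Type :=
  {C : (nat -> nat -> Prop) -> Prop |
     exists R, is_wo R /\ C = (fun S => is_wo S /\ wo_iso R S)}.

(** elements of T: nonempty finite sequences of countable ordinals *)
Definition inT (s : seq cord) : Prop := s <> [::].

Definition sext (j i : seq cord) : Prop := exists k, k <> [::] /\ i = j ++ k.

Definition inXi (xi : set (seq cord)) : Prop :=
  [/\ xi `<=` inT,
      countable xi
    & (forall j i, inT j -> sext j i -> xi i -> xi j)].

(** D = 2^omega = cantor_space; D^xi is the product of xi copies of D *)
Definition Dpow (xi : set (seq cord)) : Type :=
  {ptws {j : seq cord | xi j} -> cantor_space}.

(** x|eta = y|eta, for x, y in D^zeta and eta a subset of zeta *)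
Definition restr_eq {zeta : set (seq cord)} (eta : set (seq cord)) (x y : Dpow zeta) : Prop :=
  forall j : {j : seq cord | zeta j}, eta (sval j) -> x j = y j.

Definition IPS (zeta : set (seq cord)) (X : set (Dpow zeta)) : Prop :=
  exists (H G : Dpow zeta -> Dpow zeta),
    [/\ continuous H,
        H @` setT = X,
        (forall x, G (H x) = x),
        {within X, continuous G}
      & (forall x0 x1 xi, inXi xi -> xi `<=` zeta ->
           (restr_eq xi x0 x1 <-> restr_eq xi (H x0) (H x1)))].

(* Main.v *)
Require Import Defs.
From HB Require Import structures.
From mathcomp Require Import all_boot all_order.
From mathcomp Require Import all_classical all_reals all_analysis.
Local Open Scope classical_set_scope.

Lemma countU_aux T (A B : set T) : countable A -> countable B -> countable (A `|` B).
Proof.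
move=> cA cB.
have -> : A `|` B = \bigcup_(b in [set: bool]) (if b then A else B).
  apply/seteqP; split => x /=.
  - by case=> h; [exists true | exists false].
  - by case=> [[]] _ h; [left | right].
apply: bigcup_countable => // -[]//.
Qed.

Lemma sext_take (j i : seq cord) : sext j i -> j = take (size j) i.
Proof. by case=> k [_ ->]; rewrite take_size_cat. Qed.

Lemma sext_trans (a b c : seq cord) : sext a b -> sext b c -> sext a c.
Proof.
case=> k [hk ->] [k' [hk' ->]]; exists (k ++ k'); split; last by rewrite catA.
by case: k hk.
Qed.

Lemma sext_irr (a : seq cord) : ~ sext a a.
Proof.
case=> k [hk /(congr1 size)]; rewrite size_cat; case: k hk => //= x k _.
move=> /eqP; rewrite -[X in X == _]addn0 eqn_add2l.
done.
Qed.

Lemma Q_countable (i : seq cord) : countable [set j | inT j /\ sext j i].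
Proof.
apply: (@sub_countable _ _ _ ((fun n => take n i) @` [set: nat])).
  apply: subset_card_le => j [_ /sext_take h]; exists (size j) => //.
apply: card_le_trans; first exact: card_image_le.
exact: countableP.
Qed.

Theorem lemma2p6 (zeta : set (seq cord)) (Hzeta : inXi zeta)
  (X : set (Dpow zeta)) (HX : IPS X)
  (eta : set (seq cord)) (Heta : inXi eta) (Hsub : eta `<=` zeta)
  (i : seq cord) (Hi : zeta i) (Hni : ~ eta i) :
  exists x y : Dpow zeta, [/\ X x, X y, restr_eq eta x y
    & x (exist _ i Hi) <> y (exist _ i Hi)].
Proof.
case: HX => H [G [_ HX _ _ Hres]].
case: Hzeta => zT zC zD.
case: Heta => eT eC eD.
pose Q := [set j | inT j /\ sext j i].
pose xi1 := eta `|` Q.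
pose xi2 := xi1 `|` [set i].
have QZ : Q `<=` zeta by move=> j [hj hs]; exact: (zD j i).
have X1 : inXi xi1.
  split.
  - by move=> j [/eT|[]].
  - exact/countU_aux/Q_countable.
  - move=> j l hj hs [/(eD _ _ hj hs) h|[hl hs']]; first by left.
    by right; split => //; exact: sext_trans hs hs'.
have X2 : inXi xi2.
  split.
  - by move=> j [[/eT|[]]|->] //; exact: zT.
  - by apply/countU_aux; [case: X1|exact: countable1].
  - move=> j l hj hs [h|e].
      by left; case: X1 => _ _ D; exact: D hs h.
    by left; right; move: e hs; rewrite /set1 /= => -> hs; split.
have S1 : xi1 `<=` zeta by move=> j [/Hsub|/QZ].
have S2 : xi2 `<=` zeta by move=> j [/S1|->].
have ni1 : ~ xi1 i by case=> // -[_ /sext_irr].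
pose x0 : Dpow zeta := fun _ => (fun _ => false).
pose x1 : Dpow zeta := fun j => if pselect (sval j = i) then (fun _ => true) else (fun _ => false).
have e01 : restr_eq xi1 x0 x1.
  move=> j hj; rewrite /x0 /x1; case: pselect => // e.
  by exfalso; apply: ni1; rewrite -e.
have eH := (Hres x0 x1 xi1 X1 S1).1 e01.
exists (H x0), (H x1); split.
- by rewrite -HX; exists x0.
- by rewrite -HX; exists x1.
- by move=> j hj; apply: eH; left.
- move=> heq.
  have e2 : restr_eq xi2 (H x0) (H x1).
    move=> [s hs] /= [h|hsi]; first exact: (eH (exist _ s hs)).
    move: hs; rewrite hsi => hs; by rewrite (Prop_irrelevance hs Hi).
  have := (Hres x0 x1 xi2 X2 S2).2 e2 (exist _ i Hi) (or_intror (erefl i) : xi2 i).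
  have -> : x1 (exist _ i Hi) = (fun _ => true) by rewrite /x1 /=; case: pselect.
  move=> h; have := congr1 (fun f : cantor_space => f 0%N) h.
  by rewrite /x0.
Qed.
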